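(* Let $n \ge k \ge 1$ be integers and let $G$ be the digraph whose vertex set is $C = \{x \in \mathbb{Z}^k : x_i \ge 1 \text{ for all } i,\ \sum_{i=1}^k x_i = n\}$, with a directed edge from $x$ to $y$ whenever $y = x + \delta_i$ for some $i \in \{1,\dots,k\}$. Then $G$ is self-converse, i.e. $G$ is isomorphic to the digraph obtained from $G$ by reversing the direction of every edge.
   Context: For $i \in \{1,\dots,k\}$, $\delta_i \in \mathbb{Z}^k$ is the vector with entry $1$ in position $i$, entry $-1$ in position $i+1$ (taken mod $k$, so $\delta_k$ has $1$ in position $k$ and $-1$ in position $1$), and $0$ elsewhere. (Vertices of $G$ are the unblocked configurations of $k$ workers on a circle of $n$ bins, $x_i$ being the distance from worker $i$ to worker $i+1$; an edge $x \to x+\delta_i$ corresponds to worker $i+1$ advancing one bin by a single Bernoulli failure.) Two digraphs are isomorphic if there is a bijection between vertex sets such that $(u,v)$ is an edge of the first iff the image pair is an edge of the second. *)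

(* Defs.v *)
From HB Require Import structures.
From mathcomp Require Import all_boot all_order all_algebra.
Set Implicit Arguments. Unset Strict Implicit. Unset Printing Implicit Defensive.
Import Order.TTheory GRing.Theory Num.Theory.
Local Open Scope ring_scope.

(* Points of Z^k, coordinates indexed by 'I_k (position i+1 in the paper is index i). *)
Definition pt (k : nat) := {ffun 'I_k -> int}.

(* delta_i : +1 at position i, -1 at position i+1 (mod k). For k = 1 this is 0. *)
Definition delta (k : nat) (i : 'I_k) : pt k :=
  [ffun j => (j == i)%:R - (j == ordS i)%:R].

Definition inC (n k : nat) (x : pt k) : bool :=
  [forall i, 1 <= x i] && (\sum_(i < k) x i == n%:Z).

Definition vertex (n k : nat) := {x : pt k | @inC n k x}.

Definition edgeG (n k : nat) (x y : vertex n k) : Prop :=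
  exists i : 'I_k, val y = val x + delta i.

(* G is self-converse: there is a bijection f of the vertex set with
   (u,v) an edge of G iff (f u, f v) is an edge of the converse of G,
   i.e. iff (f v, f u) is an edge of G. *)
Definition self_converse (V : Type) (E : V -> V -> Prop) : Prop :=
  exists f : V -> V, bijective f /\ forall u v, E u v <-> E (f v) (f u).

(* Main.v *)
Require Import Defs.
From mathcomp Require Import all_boot all_order all_algebra.
Set Implicit Arguments. Unset Strict Implicit. Unset Printing Implicit Defensive.
Import GRing.Theory.

Section Big.
Variable k' : nat.
Local Notation p := k'.+2.
Local Open Scope ring_scope.

Definition fl (x : pt p) : pt p := [ffun j : 'I_p => x (- j)].

Lemma flK : involutive fl.
Proof. by move=> x; apply/ffunP=> j; rewrite !ffunE opprK. Qed.

Lemma oS (a : 'I_p) : ordS a = a + 1.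
Proof. exact: (esym (@add_Zp_1 p a)). Qed.

Lemma fl_delta (z : pt p) (i : 'I_p) :
  fl (z + delta i) = fl z - delta (- i - 1).
Proof.
apply/ffunP=> j; rewrite !ffunE.
rewrite !oS subrK.
have E1 : (- j == i) = (j == - i) by rewrite -(inj_eq oppr_inj) opprK.
have E2 : (- j == i + 1) = (j == - i - 1).
  by rewrite -(inj_eq oppr_inj) opprK opprD.
rewrite E1 E2; congr (_ + _); by case: (j == - i); case: (j == - i - 1).
Qed.

Lemma fl_inC n (x : pt p) : inC n x -> inC n (fl x).
Proof.
case/andP=> /forallP H /eqP S; apply/andP; split.
  by apply/forallP=> i; rewrite ffunE.
rewrite -S (reindex_inj oppr_inj) /=; apply/eqP; apply: eq_bigr => i _.
by rewrite ffunE opprK.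
Qed.

Lemma big_case n : self_converse (@edgeG n p).
Proof.
pose F (u : vertex n p) : vertex n p := exist _ (fl (val u)) (fl_inC (valP u)).
have FK : involutive F by move=> u; apply: val_inj; rewrite /= flK.
exists F; split; first exact: (inv_bij FK).
move=> u v; split.
  case=> i Hi; exists (- i - 1); rewrite /= Hi fl_delta subrK //.
case=> m Hm; exists (- m - 1).
have := congr1 fl Hm; rewrite /= flK fl_delta flK => ->.
by rewrite subrK.
Qed.
End Big.

Theorem lemma2 (n k : nat) (hk : (1 <= k)%N) (hkn : (k <= n)%N) :
  self_converse (@edgeG n k).
Proof.
case: k hk hkn => // [[|k']] _ _; last exact: big_case.
have D : forall i : 'I_1, delta i = 0%R.
  move=> i; apply/ffunP=> j; rewrite !ffunE.
  by rewrite (ord1 j) (ord1 i) (ord1 (ordS ord0)) eqxx GRing.subrr.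
exists id; split; first by exists id.
move=> u v; split; case=> i Hi; exists i; move: Hi; rewrite D GRing.addr0 => ->;
  by rewrite GRing.addr0.
Qed.
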